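(* Let $n\ge1$, let $v=(v_1,\ldots,v_n)\in\mathbb{R}^n$ and $\lambda=(\lambda_1,\ldots,\lambda_n)\in\mathbb{R}^n$ satisfy $\lambda(v):=\sum_{i=1}^n\lambda_iv_i>0$, and put $\|\lambda\|_\infty=\max_i|\lambda_i|$, $\|v\|_\infty=\max_i|v_i|$. Let $H\subseteq Q_n$ be any set of more than $2^{n-1}$ vertices. Then there exists $\beta\in H$ such that \[ \sqrt{\lambda(v)}\ \le\ \|\lambda\|_\infty\cdot\#\{\gamma\in H:\gamma\to\beta\}+\|v\|_\infty\cdot\#\{\gamma\in H:\beta\to\gamma\}. \]
   Context: $Q_n=\{0,1\}^n$ is the boolean cube, viewed as a graph in which two vertices are adjacent iff they differ in exactly one coordinate. For $\gamma,\beta\in Q_n$ write $\gamma\to\beta$ if $\gamma$ and $\beta$ differ in exactly one coordinate $k$ and $\gamma_k=0$, $\beta_k=1$ (i.e. $\beta$ is obtained from $\gamma$ by changing a single $0$ to $1$). *)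

(* Defs.v *)
From HB Require Import structures.
From mathcomp Require Import all_boot all_order all_algebra.
Set Implicit Arguments. Unset Strict Implicit. Unset Printing Implicit Defensive.
Import Order.TTheory GRing.Theory Num.Theory.

(* Vertices of the boolean cube Q_n = {0,1}^n (false = 0, true = 1). *)
Definition cube (n : nat) := {ffun 'I_n -> bool}.

Definition arrow (n : nat) (gamma beta : cube n) : bool :=
  [exists k : 'I_n, [&& gamma k == false, beta k == true &
     [forall j : 'I_n, (j != k) ==> (gamma j == beta j)]]].

Local Open Scope ring_scope.

(* sup norm: max_i |x_i| (0 for n = 0, norms are nonnegative). *)
Definition linf (R : numDomainType) (n : nat) (x : 'I_n -> R) : R :=
  \big[Num.max/0]_(i < n) `|x i|.

Definition pairing (R : numDomainType) (n : nat) (lam v : 'I_n -> R) : R :=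
  \sum_(i < n) lam i * v i.

(* Main.v *)
Require Import Defs.
From HB Require Import structures.
From mathcomp Require Import all_boot all_order all_algebra.
From mathcomp Require Import ring lra zify.
From Stdlib Require Import Lia.
Import Order.TTheory GRing.Theory Num.Theory.
Set Implicit Arguments. Unset Strict Implicit.
Local Open Scope ring_scope.

Definition flip n (g : cube n) (k : 'I_n) : cube n :=
  [ffun j => if j == k then ~~ g j else g j].

Lemma flipK n (g : cube n) k : flip (flip g k) k = g.
Proof. by apply/ffunP=> j; rewrite !ffunE; case: eqP => // ->; rewrite negbK. Qed.

Lemma flipC n (g : cube n) k l : flip (flip g k) l = flip (flip g l) k.
Proof.
apply/ffunP=> j; rewrite !ffunE.
case: (j =P l) => [jl|jl]; case: (j =P k) => [jk|jk] //.
Qed.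

Lemma flip_neq n (g : cube n) k : flip g k != g.
Proof. by apply/eqP=> /ffunP /(_ k); rewrite ffunE eqxx; case: (g k). Qed.

Lemma flip_inj n (g : cube n) k l : flip g k = flip g l -> k = l.
Proof.
move=> /ffunP /(_ k); rewrite !ffunE eqxx; case: (k =P l) => // _.
by case: (g k).
Qed.

Definition sg (R : comNzRingType) n (g : cube n) (k : 'I_n) : R :=
  \prod_(j < n | (k < j)%N) (if g j then -1 else 1).

Definition wt (R : comNzRingType) n (lam v : 'I_n -> R) (g : cube n) k : R :=
  sg R g k * (if g k then v k else lam k).

Definition Bf (R : comNzRingType) n (lam v : 'I_n -> R) (g b : cube n) : R :=
  \sum_(k < n) (b == flip g k)%:R * wt lam v g k.

Lemma sg_flip_same (R : comNzRingType) n (g : cube n) (k l : 'I_n) : (l <= k)%N ->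
  sg R (flip g l) k = sg R g k.
Proof.
move=> lk; apply: eq_bigr => j kj; rewrite ffunE.
by case: (j =P l) => // jl; move: kj; rewrite jl ltnNge lk.
Qed.

Lemma sg_flip_gt (R : comNzRingType) n (g : cube n) (k l : 'I_n) : (k < l)%N ->
  sg R (flip g l) k = - sg R g k.
Proof.
move=> kl; rewrite /sg (bigD1 l) //= [in RHS](bigD1 l) //= ffunE eqxx.
rewrite -mulNr; congr (_ * _).
  by case: (g l); rewrite ?opprK.
by apply: eq_bigr => j /andP [_ jl]; rewrite ffunE (negbTE jl).
Qed.

Lemma wt_anti (R : comNzRingType) n (lam v : 'I_n -> R) (g : cube n) (k l : 'I_n) : k != l ->
  wt lam v g k * wt lam v (flip g k) l + wt lam v g l * wt lam v (flip g l) k = 0.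
Proof.
wlog kl : k l / (k < l)%N.
  move=> W kl; case: (ltngtP k l) => h; first exact: W.
  - by rewrite addrC W // eq_sym.
  - by move: kl; rewrite (val_inj h) eqxx.
move=> nkl; rewrite /wt sg_flip_same ?(ltnW kl) // sg_flip_gt //.
rewrite !ffunE (negbTE nkl) eq_sym (negbTE nkl).
by ring.
Qed.

Lemma sum_ind (R : comNzRingType) (T : finType) (c : T) (F : T -> R) :
  \sum_b (b == c)%:R * F b = F c.
Proof.
rewrite (bigD1 c) //= eqxx mul1r big1 ?addr0 // => b /negbTE ->.
by rewrite mul0r.
Qed.

Lemma anti_sum (R : realFieldType) n (F : 'I_n -> 'I_n -> R) :
  (forall k l, k != l -> F k l + F l k = 0) ->
  \sum_k \sum_(l | l != k) F k l = 0.
Proof.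
move=> HF.
have E : \sum_k \sum_(l | l != k) F k l = \sum_k \sum_l (if l != k then F k l else 0).
  by apply: eq_bigr => k _; rewrite big_mkcond.
have E2 : \sum_k \sum_l (if l != k then F k l else 0)
        = \sum_k \sum_l (if k != l then F l k else 0).
  by rewrite exchange_big.
have E3 : \sum_k \sum_l (if l != k then F k l else 0)
        + \sum_k \sum_l (if k != l then F l k else 0) = 0.
  rewrite -big_split big1 // => k _; rewrite -big_split big1 // => l _ /=.
  rewrite [l == k]eq_sym; case: (boolP (k != l)) => h; [exact: HF | by rewrite addr0].
rewrite E; move: E3; rewrite -E2; lra.
Qed.

Lemma sg_sq (R : comNzRingType) n (g : cube n) k : sg R g k * sg R g k = 1.
Proof.
rewrite /sg -big_split /= big1 // => j _; case: (g j); rewrite ?mulr1 //.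
by rewrite mulrNN mulr1.
Qed.

Lemma Bf_sq (R : rcfType) n (lam v : 'I_n -> R) (g d : cube n) :
  \sum_b Bf lam v g b * Bf lam v b d = (g == d)%:R * pairing lam v.
Proof.
rewrite /Bf.
under eq_bigr do rewrite mulr_suml.
rewrite exchange_big /=.
under eq_bigr do under eq_bigr do rewrite -mulrA.
under eq_bigr do rewrite sum_ind.
under eq_bigr do rewrite mulr_sumr.
pose F k l := (d == flip (flip g k) l)%:R * (wt lam v g k * wt lam v (flip g k) l).
transitivity (\sum_k \sum_l F k l).
  by apply: eq_bigr => k _; apply: eq_bigr => l _; rewrite /F; ring.
under eq_bigr => k _ do rewrite (bigD1 k) //=.
rewrite big_split /= anti_sum ?addr0.
  rewrite /pairing mulr_sumr; apply: eq_bigr => k _.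
  rewrite /F flipK eq_sym /wt sg_flip_same // ffunE eqxx.
  have := sg_sq R g k; case: (g k) => /= h.
    by rewrite mulrACA h mul1r [v k * _]mulrC.
  by rewrite mulrACA h mul1r.
move=> k l kl; rewrite /F flipC -mulrDr.
by rewrite wt_anti ?mulr0.
Qed.

Lemma linf_ge0 (R : realDomainType) n (x : 'I_n -> R) : 0 <= linf x.
Proof.
rewrite /linf; elim/big_ind: _ => //= a b ha hb.
by rewrite le_max ha.
Qed.

Lemma linf_ge (R : realDomainType) n (x : 'I_n -> R) i : `|x i| <= linf x.
Proof.
rewrite /linf (bigD1 i) //= le_max lexx //.
Qed.

Lemma norm_sg (R : realDomainType) n (g : cube n) k : `|sg R g k| = 1.
Proof.
rewrite /sg; elim/big_ind: _ => //=; first by rewrite normr1.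
  by move=> a b ha hb; rewrite normrM ha hb mulr1.
by move=> j _; case: (g j); rewrite ?normrN normr1.
Qed.

Lemma Bf_bound (R : realDomainType) n (lam v : 'I_n -> R) (g b : cube n) :
  `|Bf lam v g b| <= linf lam * (arrow g b)%:R + linf v * (arrow b g)%:R.
Proof.
have hpos : 0 <= linf lam * (arrow g b)%:R + linf v * (arrow b g)%:R.
  by rewrite addr_ge0 // mulr_ge0 ?linf_ge0.
case: (boolP [exists k, b == flip g k]) => [/existsP [k /eqP bk]|hn].
  have -> : Bf lam v g b = wt lam v g k.
    rewrite /Bf (bigD1 k) //= bk eqxx mul1r big1 ?addr0 // => l lk.
    case: eqP => [/flip_inj lk'|_]; last by rewrite mul0r.
    by move: lk; rewrite lk' eqxx.
  rewrite /wt normrM norm_sg mul1r.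
  subst b.
  have ar : forall j, j != k -> (flip g k j == g j) && (g j == flip g k j).
    by move=> j jk; rewrite ffunE (negbTE jk) eqxx.
  case gk: (g k).
    have -> : arrow (flip g k) g.
      apply/existsP; exists k; rewrite ffunE eqxx gk /=.
      apply/forallP => j; apply/implyP => jk; by case/andP: (ar j jk).
    apply: le_trans (linf_ge v k) _.
    by rewrite mulr1 lerDr mulr_ge0 ?linf_ge0.
  have -> : arrow g (flip g k).
    apply/existsP; exists k; rewrite ffunE eqxx gk /=.
    apply/forallP => j; apply/implyP => jk; by case/andP: (ar j jk).
  apply: le_trans (linf_ge lam k) _.
  by rewrite mulr1 lerDl mulr_ge0 ?linf_ge0.
rewrite /Bf big1 ?normr0 // => k _.
case: eqP => [bk|]; last by rewrite mul0r.
by move: hn; rewrite negb_exists => /forallP /(_ k); rewrite bk eqxx.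
Qed.

Definition Bm (R : comNzRingType) n (lam v : 'I_n -> R) : 'M[R]_#|{: cube n}| :=
  \matrix_(i, j) Bf lam v (enum_val i) (enum_val j).

Lemma Bm_sq (R : rcfType) n (lam v : 'I_n -> R) :
  Bm lam v *m Bm lam v = (pairing lam v)%:M.
Proof.
apply/matrixP => i j; rewrite !mxE.
under eq_bigr do rewrite !mxE.
rewrite -(big_enum_val (A := {: cube n}) (fun b => Bf lam v (enum_val i) b * Bf lam v b (enum_val j))).
rewrite Bf_sq (inj_eq enum_val_inj) mulrC -mulr_natr.
by rewrite mul1r mulr_natr.
Qed.

Lemma eigen_exists (R : rcfType) n (hn : (0 < n)%N)
  (v lam : 'I_n -> R) (hpos : 0 < pairing lam v)
  (H : {set cube n}) (hH : (2 ^ n.-1 < #|H|)%N) :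
  exists t : R, exists x : 'rV[R]_#|{: cube n}|,
   [/\ `|t| = Num.sqrt (pairing lam v), x != 0, x *m Bm lam v = t *: x &
       forall g, g \notin H -> x 0 (enum_rank g) = 0].
Proof.
set N := #|{: cube n}|.
have hN : N = (2 ^ n.-1 + 2 ^ n.-1)%N.
  rewrite /N card_ffun card_bool card_ord addnn -mul2n -expnS.
  by rewrite prednK.
set s := Num.sqrt (pairing lam v).
set B := Bm lam v.
have s0 : 0 <= s by rewrite sqrtr_ge0.
have ss : s * s = pairing lam v by rewrite -expr2 sqr_sqrtr // ltW.
have P : (B + s%:M) *m (B - s%:M) = 0.
  rewrite mulmxDl !mulmxBr Bm_sq mul_mx_scalar mul_scalar_mx -scalar_mxM ss.
  rewrite addrA subrK.
  exact: subrr.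
have r1 : (\rank (B + s%:M)%R <= \rank (kermx (B - s%:M)))%N.
  by apply: mxrankS; apply/sub_kermxP.
have r2 : \rank (kermx (B + s%:M)) = (N - \rank (B + s%:M)%R)%N by rewrite mxrank_ker.
have rl : (\rank (B + s%:M)%R <= N)%N by apply: rank_leq_col.
have [t [ht hK]] : exists t : R, `|t| = s /\ (2 ^ n.-1 <= \rank (kermx (B - t%:M)))%N.
  case: (leqP (2 ^ n.-1) (\rank (kermx (B - s%:M)))) => h.
    by exists s; rewrite ger0_norm.
  exists (- s); rewrite normrN ger0_norm //; split => //.
  rewrite raddfN /= opprK r2; lia.
set K := kermx (B - t%:M).
pose Sel : 'M[R]_(N, #|~: H|) := \matrix_(i, j) (enum_val i == enum_val j)%:R.
have rS : (\rank (kermx Sel) >= #|H|)%N.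
  rewrite mxrank_ker.
  have := rank_leq_col Sel; have := cardsC H; rewrite -/N; lia.
have rsum := mxrank_sum_cap K (kermx Sel).
have rsN : (\rank (K + kermx Sel)%MS <= N)%N by apply: rank_leq_col.
have cap0 : (K :&: kermx Sel)%MS != 0.
  rewrite -mxrank_eq0; apply/eqP => h0; move: rsum; rewrite h0.
  have hK' : (2 ^ n.-1 <= \rank K)%N by [].
  have h1 : (2 ^ n.-1 + #|H| <= \rank K + \rank (kermx Sel))%N by apply: leq_add.
  rewrite addn0 => h2; move: h1; rewrite -h2 => h1.
  have := leq_trans h1 rsN; rewrite hN leq_add2l leqNgt.
  by rewrite (leq_trans _ hH).
case/rowV0Pn: cap0 => x; rewrite sub_capmx => /andP [xK xS] x0.
exists t, x; split => //.
  move/sub_kermxP: xK; rewrite mulmxBr mul_mx_scalar => /eqP.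
  by rewrite subr_eq0 => /eqP.
move=> g gH; have gC : g \in ~: H by rewrite inE.
move/sub_kermxP: xS => /matrixP /(_ 0 (enum_rank_in gC g)).
rewrite !mxE /Sel; under eq_bigr do rewrite mxE.
rewrite enum_rankK_in //.
rewrite (bigD1 (enum_rank g)) //= enum_rankK eqxx mulr1.
rewrite big1 ?addr0 // => i ig.
case: eqP => [ig'|_]; last by rewrite mulr0.
by move: ig; rewrite -ig' enum_valK eqxx.
Qed.

Lemma sum_card (R : comNzRingType) (T : finType) (A : {set T}) :
  \sum_g (g \in A)%:R = #|A|%:R :> R.
Proof.
rewrite -sum1_card natr_sum [RHS]big_mkcond /=.
by apply: eq_bigr => g _; case: (g \in A).
Qed.

Theorem mainTheorem2 (R : rcfType) (n : nat) (hn : (0 < n)%N)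
  (v lam : 'I_n -> R) (hpos : 0 < pairing lam v)
  (H : {set cube n}) (hH : (2 ^ n.-1 < #|H|)%N) :
  exists2 beta, beta \in H &
    Num.sqrt (pairing lam v) <=
      linf lam * (#|[set gamma in H | arrow gamma beta]|)%:R
      + linf v * (#|[set gamma in H | arrow beta gamma]|)%:R.
Proof.
have [t [x [ht x0 xB xH]]] := eigen_exists hn hpos hH.
pose f := fun g : cube n => `|x 0 (enum_rank g)|.
have [b hb] : exists b, forall g, f g <= f b.
  case: (@arg_maxP _ R (cube n) [ffun => false] xpredT f isT) => b _ hb.
  by exists b => g; apply: hb.
have [i xi] : exists i, x 0 i != 0.
  case: (pickP (fun i => x 0 i != 0)) => [i xi|hall]; first by exists i.
  case/negP: x0; apply/eqP/rowP => i; rewrite mxE.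
  by move: (hall i) => /negbFE/eqP.
have fb : 0 < f b.
  apply: lt_le_trans (hb (enum_val i)); rewrite /f enum_valK.
  by rewrite normr_gt0.
have bH : b \in H.
  apply/negPn/negP => bH; move: fb; rewrite /f xH //.
  by rewrite normr0 ltxx.
exists b => //.
pose G := fun g : cube n => linf lam * (g \in [set gamma in H | arrow gamma b])%:R
   + linf v * (g \in [set gamma in H | arrow b gamma])%:R.
have e : \sum_m x 0 m * Bf lam v (enum_val m) b = t * x 0 (enum_rank b).
  move/matrixP: xB => /(_ 0 (enum_rank b)); rewrite !mxE => <-.
  by apply: eq_bigr => m _; rewrite mxE enum_rankK.
have pw : forall m, `|x 0 m| * `|Bf lam v (enum_val m) b| <= f b * G (enum_val m).
  move=> m; set g := enum_val m.
  have xm : x 0 m = x 0 (enum_rank g) by rewrite /g enum_valK.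
  have G0 : 0 <= G g by rewrite /G addr_ge0 // mulr_ge0 ?linf_ge0.
  case: (boolP (g \in H)) => gH; last first.
    by rewrite xm xH // normr0 mul0r mulr_ge0 // ltW.
  apply: ler_pM => //; first by rewrite xm; apply: hb.
  by rewrite /G !inE gH /=; apply: Bf_bound.
have main : Num.sqrt (pairing lam v) * f b <= (\sum_g G g) * f b.
  rewrite -ht /f -normrM -e.
  apply: le_trans (ler_norm_sum _ _ _) _.
  rewrite mulrC mulr_sumr (big_enum_val (A := {: cube n})).
  by apply: ler_sum => m _; rewrite normrM; apply: pw.
move: main; rewrite ler_pM2r // => main; apply: le_trans main _.
rewrite /G big_split /= -!mulr_sumr !sum_card.
done.
Qed.
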